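(* Let $\langle P,\wedge,\vee,0,1,\circ\rangle$ be a universale such that $\circ$ is idempotent ($a\circ a=a$ for all $a\in P$) and the identity element of the monoid $\langle P,\circ\rangle$ equals the least element $0$ of the lattice. Then $\langle P,\wedge,\vee,0,1\rangle$ is a globale.
   Context: A universale is a structure $\langle P,\wedge,\vee,0,1,\circ\rangle$ such that: (1) $\langle P,\wedge,\vee\rangle$ is a complete lattice with least element $0$ and greatest element $1$; (2) $\langle P,\circ\rangle$ is a monoid with some identity element $0'$; (3) for every $b\in P$ and every $T\subseteq P$, $b\circ\bigwedge T=\bigwedge\{b\circ t\mid t\in T\}$ and $(\bigwedge T)\circ b=\bigwedge\{t\circ b\mid t\in T\}$. A globale is a complete lattice $\langle L,\wedge,\vee,0,1\rangle$ such that for all $w\in L$ and all $Z\subseteq L$, $w\vee\bigwedge Z=\bigwedge\{w\vee z\mid z\in Z\}$. *)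

(* Defs.v *)
Set Implicit Arguments.

Section Defs.
Variable P : Type.
Variable le : P -> P -> Prop.

Definition is_glb (S : P -> Prop) (x : P) : Prop :=
  (forall y, S y -> le x y) /\ (forall z, (forall y, S y -> le z y) -> le z x).
Definition is_lub (S : P -> Prop) (x : P) : Prop :=
  (forall y, S y -> le y x) /\ (forall z, (forall y, S y -> le y z) -> le x z).

Definition complete_lattice (meet join : P -> P -> P)
  (Inf Sup : (P -> Prop) -> P) (bot top : P) : Prop :=
  (forall x, le x x) /\
  (forall x y, le x y -> le y x -> x = y) /\
  (forall x y z, le x y -> le y z -> le x z) /\
  (forall x y, is_glb (fun t => t = x \/ t = y) (meet x y)) /\
  (forall x y, is_lub (fun t => t = x \/ t = y) (join x y)) /\
  (forall S, is_glb S (Inf S)) /\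
  (forall S, is_lub S (Sup S)) /\
  (forall x, le bot x) /\ (forall x, le x top).

Definition img (f : P -> P) (S : P -> Prop) : P -> Prop :=
  fun y => exists t, S t /\ y = f t.

Definition is_monoid (circ : P -> P -> P) (e : P) : Prop :=
  (forall a b c, circ a (circ b c) = circ (circ a b) c) /\
  (forall a, circ e a = a) /\ (forall a, circ a e = a).

Definition universale (meet join : P -> P -> P) (Inf Sup : (P -> Prop) -> P)
  (bot top : P) (circ : P -> P -> P) : Prop :=
  complete_lattice meet join Inf Sup bot top /\
  (exists e, is_monoid circ e) /\
  (forall b T, circ b (Inf T) = Inf (img (fun t => circ b t) T)) /\
  (forall b T, circ (Inf T) b = Inf (img (fun t => circ t b) T)).

Definition globale (meet join : P -> P -> P) (Inf Sup : (P -> Prop) -> P)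
  (bot top : P) : Prop :=
  complete_lattice meet join Inf Sup bot top /\
  (forall w Z, join w (Inf Z) = Inf (img (fun z => join w z) Z)).
End Defs.

(* Main.v *)
Require Import Defs.
From Stdlib Require Import Setoid.

Theorem mainTheorem5 (P : Type) (le : P -> P -> Prop) (meet join : P -> P -> P)
  (Inf Sup : (P -> Prop) -> P) (bot top : P) (circ : P -> P -> P) :
  universale le meet join Inf Sup bot top circ ->
  (forall a, circ a a = a) ->
  is_monoid circ bot ->
  globale le meet join Inf Sup bot top.
Proof.
  intros [CL [_ [DL DR]]] Hid [Ha [Hl Hr]].
  pose proof CL as CL'.
  destruct CL' as [Rf [As [Tr [Mt [Jn [Ig [Su [Bt Tp]]]]]]]].
  split; [exact CL|].
  assert (Hpair : forall x y, le x y -> Inf (fun t => t = x \/ t = y) = x).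
  { intros x y Hxy. destruct (Ig (fun t => t = x \/ t = y)) as [H1 H2].
    apply As.
    - apply H1. left; reflexivity.
    - apply H2. intros t [->| ->]; [apply Rf|exact Hxy]. }
  assert (MonL : forall c x y, le x y -> le (circ c x) (circ c y)).
  { intros c x y Hxy. rewrite <- (Hpair x y Hxy) at 1. rewrite DL.
    destruct (Ig (img (fun t => circ c t) (fun t => t = x \/ t = y))) as [H1 _].
    apply H1. exists y. split; [right; reflexivity|reflexivity]. }
  assert (MonR : forall c x y, le x y -> le (circ x c) (circ y c)).
  { intros c x y Hxy. rewrite <- (Hpair x y Hxy) at 1. rewrite DR.
    destruct (Ig (img (fun t => circ t c) (fun t => t = x \/ t = y))) as [H1 _].
    apply H1. exists y. split; [right; reflexivity|reflexivity]. }
  assert (CJ : forall a b, circ a b = join a b).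
  { intros a b. destruct (Jn a b) as [J1 J2]. apply As.
    - apply Tr with (circ (join a b) (join a b)); [|rewrite Hid; apply Rf].
      apply Tr with (circ a (join a b)).
      + apply MonL. apply J1. right; reflexivity.
      + apply MonR. apply J1. left; reflexivity.
    - apply J2. intros t [Ht|Ht]; subst t.
      + rewrite <- (Hr a) at 1. apply MonL. apply Bt.
      + rewrite <- (Hl b) at 1. apply MonR. apply Bt. }
  intros w Z. rewrite <- CJ, DL.
  destruct (Ig (img (fun t => circ w t) Z)) as [A1 A2].
  destruct (Ig (img (fun z => join w z) Z)) as [B1 B2].
  apply As.
  - apply B2. intros y [t [Ht ->]]. apply A1. exists t. split; [exact Ht|symmetry; apply CJ].
  - apply A2. intros y [t [Ht ->]]. apply B1. exists t. split; [exact Ht|apply CJ].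
Qed.
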